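(* Let $f\in\mathbb{Q}[x]$ be a non-zero squarefree polynomial of degree $n$ and let $g\in\mathbb{Q}[x]$ satisfy $g(\xi)>0$ at every real root $\xi$ of $f$. Then there exist polynomials $h_1,\dots,h_n\in\mathbb{Q}[x]$ of degree $<n$ and positive weights $\omega_1,\dots,\omega_n\in\mathbb{Q}_{>0}$ such that $h:=\sum_{i=1}^n\omega_ih_i^2$ satisfies $h\equiv g\pmod f$. *)

(* Defs.v *)
From HB Require Import structures.
From mathcomp Require Import all_boot all_order all_algebra.
From mathcomp Require Import reals.
Set Implicit Arguments. Unset Strict Implicit. Unset Printing Implicit Defensive.
Import Order.TTheory GRing.Theory Num.Theory.
Local Open Scope ring_scope.

Definition squarefree_poly (F : fieldType) (p : {poly F}) : Prop :=
  forall d : {poly F}, (1 < size d)%N -> ~~ (d * d %| p).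

(* Main.v *)
Require Import Defs.
From HB Require Import structures.
From mathcomp Require Import all_boot all_order all_algebra.
From mathcomp Require Import reals.
From mathcomp Require Import all_field ring lra.
From mathcomp.real_closed Require Import polyorder complex.
From Stdlib Require Import Classical.
Set Implicit Arguments. Unset Strict Implicit. Unset Printing Implicit Defensive.
Import Order.TTheory GRing.Theory Num.Theory.
Local Open Scope ring_scope.
Lemma sqfree_sep (f : {poly rat}) : f != 0 -> squarefree_poly f -> separable_poly f.
Proof.
move=> f0 sq; apply/separable_polyP; split.
idtac.
  move=> u v uvf. apply: contraT => ncop.
  have u0 : u != 0.
    apply/eqP => u0; move: uvf; rewrite u0 mul0r dvd0p => /eqP f00; by rewrite f00 eqxx in f0.
  have gs : (1 < size (gcdp u v))%N.
    rewrite ltn_neqAle eq_sym ncop /= lt0n size_poly_eq0 gcdp_eq0 negb_and u0 //.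
  have := sq _ gs; rewrite (dvdp_trans _ uvf) // dvdp_mul ?dvdp_gcdl ?dvdp_gcdr //.
move=> u _ su; rewrite -size_poly_eq0 size_deriv; move: su; by case: (size u) => [|[|k]].
Qed.


Section SqrtMod.
Variable R : rcfType.
Local Notation toC := (real_complex R).

Lemma crt_sqrt (A B G H1 H2 : {poly R}) : coprimep A B ->
  A %| H1^+2 - G -> B %| H2^+2 - G -> exists H, A * B %| H^+2 - G.
Proof.
move=> /Bezout_eq1_coprimepP [[u v] /= e] d1 d2.
exists (H1 * (v * B) + H2 * (u * A)).
have e1 : H1 * (v * B) + H2 * (u * A) = H1 + A * (u * (H2 - H1)).
  have -> : v * B = 1 - u * A by rewrite -e; ring.
  ring.
have e2 : H1 * (v * B) + H2 * (u * A) = H2 + B * (v * (H1 - H2)).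
  have -> : u * A = 1 - v * B by rewrite -e; ring.
  ring.
rewrite Gauss_dvdp; last by apply/Bezout_eq1_coprimepP; exists (u, v).
apply/andP; split.
  rewrite e1.
  have -> : (H1 + A * (u * (H2 - H1))) ^+ 2 - G =
    (H1 ^+ 2 - G) + A * ((u * (H2 - H1)) * (2%:R * H1 + A * (u * (H2 - H1)))) by ring.
  by rewrite dvdp_add // dvdp_mulr.
rewrite e2.
have -> : (H2 + B * (v * (H1 - H2))) ^+ 2 - G =
  (H2 ^+ 2 - G) + B * ((v * (H1 - H2)) * (2%:R * H2 + B * (v * (H1 - H2)))) by ring.
by rewrite dvdp_add // dvdp_mulr.
Qed.

Lemma map_conj_real (P : {poly R}) :
  map_poly conjc (map_poly toC P) = map_poly toC P.
Proof.
rewrite -map_poly_comp; apply: eq_map_poly => x /=; exact: conjc_real.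
Qed.

Lemma root_conj_real (P : {poly R}) z :
  root (map_poly toC P) z -> root (map_poly toC P) z^*%C.
Proof. by rewrite -complex_root_conj map_conj_real. Qed.


Lemma dvdp_const (F P : {poly R}) : size F = 1%N -> F %| P.
Proof.
move/eqP/size_poly1P => [c c0 ->]; rewrite -alg_polyC dvdpZl //; exact: dvd1p.
Qed.

Lemma sqrt_mod_aux n : forall F G : {poly R}, (size F <= n)%N -> F != 0 ->
  separable_poly F -> (forall x, root F x -> 0 < G.[x]) ->
  exists H, F %| H^+2 - G.
Proof.
elim: n => [|n IH] F G sF F0 sep pos.
  by move: sF; rewrite leqn0 size_poly_eq0 (negPf F0).
have [s1|s2] := leqP (size F) 1.
  exists 0; apply: dvdp_const; apply/eqP; rewrite eqn_leq s1 lt0n size_poly_eq0 F0 //.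
case: (classic (exists a, root F a)) => [[a ra]|nor].
  move: ra; rewrite -dvdp_XsubCl => /dvdpP [F1 eF].
  have F10 : F1 != 0 by apply: contraNneq F0 => F10; rewrite eF F10 mul0r.
  have sF1 : (size F1 <= n)%N.
    move: sF; rewrite eF size_mul ?polyXsubC_eq0 // size_XsubC addn2 //.
  move: sep; rewrite eF separable_root => /andP [sep1 nr].
  have [H1 d1] : exists H1, F1 %| H1^+2 - G.
    apply: IH => // x rx; apply: pos; by rewrite eF rootM rx.
  have ga : 0 <= G.[a].
    apply: ltW; apply: pos; by rewrite eF rootM root_XsubC eqxx orbT.
  have d2 : 'X - a%:P %| (Num.sqrt G.[a])%:P ^+2 - G.
    by rewrite dvdp_XsubCl rootE !hornerE sqr_sqrtr // subrr.
  have cop : coprimep F1 ('X - a%:P) by rewrite coprimep_XsubC.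
  have [H dH] := crt_sqrt cop d1 d2.
  by exists H.
have Fc1 : size (map_poly toC F) != 1%N by rewrite size_map_poly gtn_eqF.
have [b rb] := closed_rootP _ Fc1.
case: b rb => x y rb.
have y0 : y != 0.
  apply/negP => /eqP y0; apply: nor; exists x.
  rewrite -(fmorph_root toC); move: rb; rewrite y0; exact.
pose q : {poly R} := 'X^2 - (2%:R * x) *: 'X + (x^+2 + y^+2)%:P.
have lin2 : forall (a c : R[i]), ('X - a%:P) * ('X - c%:P) = 'X^2 - (a + c) *: 'X + (a * c)%:P.
  by move=> a c; rewrite -mul_polyC polyCD polyCM; ring.
have mq : map_poly toC q = ('X - (x +i* y)%C%:P) * ('X - (x -i* y)%C%:P).
  rewrite lin2 /q rmorphD rmorphB /= map_polyXn map_polyZ map_polyX map_polyC /=.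
  congr (_ - _ *: _ + _%:P); rewrite /= /real_complex_def; simpc.
    by congr Complex; ring.
  by congr Complex; ring.
have cop2 : coprimep ('X - (x +i* y)%C%:P) ('X - (x -i* y)%C%:P).
  rewrite coprimep_XsubC2 //; rewrite /= ; simpc; rewrite eq_complex /= negb_and.
  by rewrite eqxx /= -opprD oppr_eq0 -mulr2n mulrn_eq0 negb_or y0.
have dvq : forall P : {poly R}, root (map_poly toC P) (x +i* y)%C -> q %| P.
  move=> P rP; rewrite -(dvdp_map toC) mq Gauss_dvdp // !dvdp_XsubCl rP /=.
  exact: (root_conj_real rP).
have sq : size q = 3%N.
  by rewrite -(size_map_poly toC) mq size_mul ?polyXsubC_eq0 // !size_XsubC.
have /dvdpP [F1 eF] := dvq F rb.
have F10 : F1 != 0 by apply: contraNneq F0 => F10; rewrite eF F10 mul0r.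
have q0 : q != 0 by rewrite -size_poly_eq0 sq.
have sF1 : (size F1 <= n)%N.
  move: sF; rewrite eF size_mul // sq addn3 /= => h; apply: leq_trans (leqnSn _) h.
move: sep; rewrite eF separable_mul => /and3P [sep1 _ cop].
have [H1 d1] : exists H1, F1 %| H1^+2 - G.
  apply: IH => // z rz; apply: pos; by rewrite eF rootM rz.
have [c [d ew]] : exists c d, sqrtc ((map_poly toC G).[(x +i* y)%C]) = (c +i* d)%C.
  by case: (sqrtc _) => c d; exists c, d.
pose v := d / y; pose e := c - v * x.
have hH2 : (map_poly toC (v *: 'X + e%:P)).[(x +i* y)%C] = (c +i* d)%C.
  rewrite rmorphD /= map_polyZ map_polyX map_polyC /= hornerD hornerZ hornerX hornerC.
  rewrite /= /real_complex_def; simpc; congr Complex; rewrite /e /v; field; exact: y0.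
have d2 : q %| (v *: 'X + e%:P) ^+ 2 - G.
  apply: dvq; rewrite rootE rmorphB rmorphXn /= hornerD hornerN horner_exp hH2 -ew sqr_sqrtc.
  by rewrite subrr.
have [H dH] := crt_sqrt cop d1 d2.
by exists H.
Qed.

End SqrtMod.


Section Approx.
Variable R : realType.

Lemma rat_approx (a e : R) : 0 < e -> exists q : rat, `|a - ratr q| <= e.
Proof.
move=> e0.
pose N := Num.bound (e^-1).
have NP : e^-1 < N%:R by apply: Num.Theory.archi_boundP; rewrite invr_ge0 ltW.
have N0 : (0 : R) < N%:R by apply: lt_trans NP; rewrite invr_gt0.
pose m := Num.floor (a * N%:R).
exists (m%:~R / N%:R).
have -> : ratr (m%:~R / N%:R : rat) = (m%:~R / N%:R : R).
  by rewrite fmorph_div /= ratr_int ratr_nat.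
have h1 := floor_le (a * N%:R); have h2 := floorD1_gt (a * N%:R).
rewrite -/m in h1 h2; rewrite intrD in h2.
have he : 1 / N%:R <= e.
  rewrite ler_pdivrMr // -ler_pdivrMl // mulr1; exact: ltW.
set M : R := m%:~R in h1 h2 *; set NN : R := N%:R in N0 he *.
have -> : a - M / NN = (a * NN - M) / NN by field; rewrite gt_eqF.
rewrite ger0_norm; last by rewrite divr_ge0 ?subr_ge0 // ltW.
apply: le_trans he; rewrite ler_pM2r ?invr_gt0 //; lra.
Qed.

Lemma roots_finite_aux n (F : {poly R}) : (size F <= n)%N -> F != 0 ->
  exists s : seq R, forall x, root F x -> x \in s.
Proof.
elim: n F => [|n IH] F sF F0.
  by move: sF; rewrite leqn0 size_poly_eq0 (negPf F0).
case: (boolp.pselect (exists a, root F a)) => [[a ra]|nor]; last first.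
  by exists [::] => x rx; case: nor; exists x.
move: ra; rewrite -dvdp_XsubCl => /dvdpP [F1 eF].
have F10 : F1 != 0 by apply: contraNneq F0 => F10; rewrite eF F10 mul0r.
have sF1 : (size F1 <= n)%N.
  by move: sF; rewrite eF size_mul ?polyXsubC_eq0 // size_XsubC addn2.
have [s hs] := IH F1 sF1 F10.
exists (a :: s) => x; rewrite eF rootM root_XsubC in_cons => /orP [/hs ->|->];
  by rewrite ?orbT.
Qed.

Lemma delta_exists (F G T : {poly R}) : F != 0 ->
  (forall x, root F x -> 0 < G.[x]) ->
  exists d : rat, 0 < d /\ forall x, root F x -> ratr d * T.[x] < G.[x].
Proof.
move=> F0 pos.
have [s hs] := roots_finite_aux (leqnn _) F0.
have [e [e0 he]] : exists e : R, 0 < e /\ forall x, x \in s -> root F x ->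
    e * (`|T.[x]| + 1) <= G.[x].
  elim: s {hs} => [|a s [e [e0 he]]]; first by exists 1.
  have Ta : 0 < `|T.[a]| + 1 by rewrite ltr_wpDl.
  case ra : (root F a).
    have ga := pos a ra.
    exists (Num.min e (G.[a] / (`|T.[a]| + 1))); split.
      by rewrite lt_min e0 divr_gt0.
    move=> x; rewrite in_cons => /orP [/eqP ->|xs] rx.
      rewrite -ler_pdivlMr // ge_min lexx orbT //.
    apply: le_trans (he x xs rx); rewrite ler_pM2r ?ge_min ?lexx //.
    by rewrite ltr_wpDl.
  exists e; split => // x; rewrite in_cons => /orP [/eqP ->|xs] rx.
    by rewrite ra in rx.
  exact: he.
have [q hq] := rat_approx (e / 2%:R) (divr_gt0 e0 (ltr0n _ 4)).
have q0 : (0 : R) < ratr q.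
  move: hq; rewrite ler_norml => /andP [h1 h2]; lra.
have qe : (ratr q : R) < e.
  move: hq; rewrite ler_norml => /andP [h1 h2]; lra.
exists q; split; first by rewrite -(ltr_rat R) rmorph0.
move=> x rx; have := he x (hs x rx) rx => hx.
apply: lt_le_trans hx.
have Tx : 0 < `|T.[x]| + 1 by rewrite ltr_wpDl.
apply: le_lt_trans (_ : ratr q * (`|T.[x]| + 1) < _).
  rewrite mulrDr mulr1 (le_trans (ler_norm _)) // normrM (ger0_norm (ltW q0)).
  by rewrite lerDl ltW.
by rewrite ltr_pM2r.
Qed.
End Approx.


Section Bound.
Variable K : realFieldType.

Lemma poly_expand (P : {poly K}) n : (size P <= n)%N ->
  P = \sum_(i < n) P`_i *: 'X^i.
Proof.
move=> sP; rewrite -poly_def; apply/polyP => j; rewrite coef_poly.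
by case: ltnP => // h; rewrite nth_default // (leq_trans sP h).
Qed.

Lemma modp_sum (F : {poly K}) n (a : 'I_n -> {poly K}) :
  (\sum_(i < n) a i) %% F = \sum_(i < n) (a i %% F).
Proof. exact: (big_morph (fun p => p %% F) (modpD F) (mod0p F)). Qed.

Lemma L1 (F P Q : {poly K}) n (e : K) k : (size P <= n)%N ->
  (forall i, `|P`_i| <= e) ->
  `|((P * Q) %% F)`_k| <= e * \sum_(i < n) `|(('X^i * Q) %% F)`_k|.
Proof.
move=> sP hP; rewrite {1}(poly_expand sP) mulr_suml modp_sum coef_sum mulr_sumr.
apply: le_trans (ler_norm_sum _ _ _) _; apply: ler_sum => i _.
rewrite -scalerAl modpZl coefZ normrM ler_wpM2r //.
Qed.


Definition Cb (F H0 : {poly K}) n k :=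
  \sum_(i < n) (`|(('X^i * (2%:R * H0)) %% F)`_k| +
                \sum_(j < n) `|(('X^j * 'X^i) %% F)`_k|).

Lemma L2 (F H0 D : {poly K}) n (e : K) k : (size D <= n)%N ->
  0 <= e -> e <= 1 -> (forall i, `|D`_i| <= e) ->
  `|((D * (2%:R * H0 - D)) %% F)`_k| <= e * Cb F H0 n k.
Proof.
move=> sD e0 e1 hD.
rewrite mulrBr modpD modpN coefB.
apply: (le_trans (ler_normB _ _)).
rewrite /Cb big_split /= mulrDr; apply: lerD; first exact: L1.
apply: (le_trans (@L1 F D D n e k sD hD)); rewrite ler_wpM2l //; apply: ler_sum => i _.
rewrite mulrC; apply: (le_trans (@L1 F D _ n e k sD hD)).
rewrite -[X in _ <= X]mul1r ler_wpM2r //; exact: sumr_ge0.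
Qed.

End Bound.


Lemma lin_dep n (v : 'I_n.+1 -> {poly rat}) : (forall i, (size (v i) <= n)%N) ->
  exists mu : 'I_n.+1 -> rat, (exists i, mu i != 0) /\ \sum_i mu i *: v i = 0.
Proof.
move=> sv.
pose M : 'M[rat]_(n.+1, n) := \matrix_(i, k) (v i)`_k.
have rk : (\rank (kermx M) != 0)%N.
  rewrite mxrank_ker subn_eq0 -ltnNge ltnS; exact: rank_leq_col.
rewrite mxrank_eq0 in rk.
have [i0 ri0] : exists i0, row i0 (kermx M) != 0.
  apply/existsP; apply: contraNT rk; rewrite negb_exists => /forallP h.
  apply/eqP/row_matrixP => i; rewrite row0; by have := h i; rewrite negbK => /eqP.
set u := row i0 (kermx M) in ri0.
have uM : u *m M = 0 by rewrite /u -row_mul mulmx_ker row0.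
exists (fun i => u 0 i); split.
  apply/existsP; apply: contraNT ri0; rewrite negb_exists => /forallP h.
  apply/eqP/rowP => i; have := h i; rewrite negbK => /eqP ->; by rewrite mxE.
apply/polyP => k; rewrite coef_sum coef0.
case: (ltnP k n) => kn.
  have := congr1 (fun A : 'M_(1, n) => A 0 (Ordinal kn)) uM.
  rewrite !mxE => e; apply: eq_trans _ e; apply: eq_bigr => i _. by rewrite coefZ [M _ _]mxE.
rewrite big1 // => i _; rewrite coefZ nth_default ?mulr0 //.
exact: leq_trans (sv i) kn.
Qed.

Lemma carath n (v : 'I_n.+1 -> {poly rat}) (lam : 'I_n.+1 -> rat) :
  (forall i, (size (v i) <= n)%N) -> (forall i, 0 < lam i) ->
  exists j (lam' : 'I_n.+1 -> rat), (forall i, 0 <= lam' i) /\ lam' j = 0 /\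
    \sum_i lam' i *: v i = \sum_i lam i *: v i.
Proof.
move=> sv lp.
have [mu0 [[i0 mi0] smu0]] := lin_dep sv.
have [mu [[i1 mi1] smu]] : exists mu : 'I_n.+1 -> rat,
    (exists i, 0 < mu i) /\ \sum_i mu i *: v i = 0.
  case: (ltrgtP (mu0 i0) 0) => h; last by rewrite h eqxx in mi0.
    exists (fun i => - mu0 i); split; first by exists i0; rewrite oppr_gt0.
    by under eq_bigr do rewrite scaleNr; rewrite sumrN smu0 oppr0.
  by exists mu0; split => //; exists i0.
pose P := [pred i | 0 < mu i].
have Pi1 : P i1 by [].
case: (arg_minP (fun i => lam i / mu i) Pi1) => j Pj hj.
pose t := lam j / mu j.
exists j, (fun i => lam i - t * mu i); split; last split.
- move=> i; case: (ltP 0 (mu i)) => h.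
    rewrite subr_ge0 -ler_pdivlMr //; exact: hj.
  rewrite subr_ge0 (le_trans _ (ltW (lp i))) //.
  by rewrite pmulr_rle0 // divr_gt0.
- by rewrite /t divfK ?subrr // gt_eqF.
- under eq_bigr do rewrite scalerBl.
  by rewrite sumrB; under [X in _ - X = _]eq_bigr do rewrite -scalerA;
     rewrite -scaler_sumr smu scaler0 subr0.
Qed.

Lemma dvdp_const_f (K : fieldType) (F P : {poly K}) : size F = 1%N -> F %| P.
Proof.
move/eqP/size_poly1P => [c c0 ->]; rewrite -alg_polyC dvdpZl //; exact: dvd1p.
Qed.

Lemma modp_eq_dvd (K : fieldType) (f a b : {poly K}) : a %% f = b %% f -> f %| a - b.
Proof. by move=> e; apply/modp_eq0P; rewrite modpD modpN e subrr. Qed.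

Lemma dvd_modp_eq (K : fieldType) (f a b : {poly K}) : f %| a - b -> a %% f = b %% f.
Proof.
by move/modp_eq0P; rewrite modpD modpN => /eqP; rewrite subr_eq0 => /eqP.
Qed.

Lemma modp_lin (K : fieldType) (f : {poly K}) n (c : 'I_n -> K) (P : 'I_n -> {poly K}) :
  (\sum_i c i *: P i) %% f = \sum_i c i *: (P i %% f).
Proof.
rewrite (big_morph (fun p => p %% f) (modpD f) (mod0p f)).
by apply: eq_bigr => i _; rewrite modpZl.
Qed.

Theorem mainTheorem6 (R : realType) (f g : {poly rat}) :
  f != 0 ->
  squarefree_poly f ->
  (forall xi : R, root (map_poly ratr f) xi -> 0 < (map_poly ratr g).[xi]) ->
  exists (h : 'I_(size f).-1 -> {poly rat}) (w : 'I_(size f).-1 -> rat),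
    (forall i, size (h i) <= (size f).-1)%N /\
    (forall i, 0 < w i) /\
    f %| (\sum_(i < (size f).-1) (w i)%:P * (h i) ^+ 2) - g.
Proof.
move=> f0 sq pos.
set n := (size f).-1.
have sf : size f = n.+1 by rewrite /n prednK // lt0n size_poly_eq0.
clearbody n.
case En : n => [|m].
  exists (fun _ => 0), (fun _ => 1); split; first by case.
  split; first by case.
  by apply: dvdp_const_f; rewrite sf En.
rewrite -En.
have sep := sqfree_sep f0 sq.
pose F : {poly R} := map_poly ratr f.
have F0 : F != 0 by rewrite map_poly_eq0.
have sF : size F = n.+1 by rewrite size_map_poly.
have sepF : separable_poly F by rewrite separable_map.
pose T : {poly rat} := \sum_(k < n) ('X^k) ^+ 2.
have [d [d0 hd]] := delta_exists (map_poly ratr T) F0 pos.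
pose G' : {poly R} := map_poly ratr (g - d%:P * T).
have pos' : forall x, root F x -> 0 < G'.[x].
  move=> x rx; rewrite /G' rmorphB rmorphM /= map_polyC /= hornerD hornerN hornerM hornerC.
  by rewrite subr_gt0; apply: hd.
have [H dH] := sqrt_mod_aux (leqnn _) F0 sepF pos'.
pose H0 := H %% F.
have sH0 : (size H0 <= n)%N by rewrite -ltnS -sF ltn_modpN0.
have dH0 : F %| H0 ^+ 2 - G'.
  have eH : H = (H %/ F) * F + H0 by exact: divp_eq.
  have -> : H0 ^+ 2 - G' = (H ^+ 2 - G') + F * ((H %/ F) * ((H %/ F) * F - 2%:R * H)).
    by rewrite {1 4}eH; ring.
  by rewrite dvdp_add // dvdp_mulr.
have n0 : (0 < n)%N by rewrite En.
have nR : (0 : R) < n%:R by rewrite ltr0n.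
have Cb0 : forall k, 0 <= Cb F H0 n k.
  move=> k; apply: sumr_ge0 => i _; apply: addr_ge0 => //; exact: sumr_ge0.
pose Cbig := 1 + \sum_(k < n) Cb F H0 n k.
have Cbig0 : 0 < Cbig by rewrite ltr_wpDr // sumr_ge0.
have CbC : forall k, (k < n)%N -> Cb F H0 n k <= Cbig.
  move=> k kn; rewrite /Cbig (bigD1 (Ordinal kn)) //=. rewrite addrCA lerDl.
  by rewrite addr_ge0 // sumr_ge0.
have dR : (0 : R) < ratr d by rewrite ltr0q.
pose e := Num.min 1 (ratr d / (4%:R * n%:R * Cbig)).
have e0 : 0 < e by rewrite lt_min ltr01 divr_gt0 // !mulr_gt0.
have e1 : e <= 1 by rewrite ge_min lexx.
have eC : e * Cbig <= ratr d / (4%:R * n%:R).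
  have : e <= ratr d / (4%:R * n%:R * Cbig) by rewrite ge_min lexx orbT.
  rewrite -(ler_pM2r Cbig0) => /le_trans; apply.
  have C0 : Cbig != 0 by rewrite gt_eqF.
  have n0' : n%:R != 0 :> R by rewrite gt_eqF.
  by rewrite le_eqVlt; apply/orP; left; apply/eqP; field; rewrite C0 n0'.
pose q i := xchoose (rat_approx (H0`_i) e0).
have hq : forall i, `|H0`_i - ratr (q i)| <= e by move=> i; exact: (xchooseP (rat_approx (H0`_i) e0)).
pose h : {poly rat} := \poly_(i < n) q i.
have sh : (size h <= n)%N by exact: size_poly.
pose D := H0 - map_poly ratr h.
have sD : (size D <= n)%N.
  by rewrite (leq_trans (size_add _ _)) // geq_max sH0 size_opp size_map_poly.
have hD : forall i, `|D`_i| <= e.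
  move=> i; rewrite /D coefB coef_map /= coef_poly.
  case: ltnP => il; first exact: hq.
  by rewrite nth_default ?(leq_trans sH0) // rmorph0 subr0 normr0 ltW.
pose r := (g - h ^+ 2 - d%:P * T) %% f.
have sr : (size r <= n)%N by rewrite -ltnS -sf ltn_modpN0.
have er : map_poly ratr r = (D * (2%:R * H0 - D)) %% F.
  have e2 := dvd_modp_eq dH0.
  have -> : D * (2%:R * H0 - D) = H0 ^+ 2 - (map_poly ratr h) ^+ 2 by rewrite /D; ring.
  rewrite /r map_modp -/F !rmorphB /= rmorphXn /=.
  have -> : map_poly ratr g - map_poly ratr h ^+ 2 - map_poly ratr (d%:P * T) =
     G' - map_poly ratr h ^+ 2 by rewrite /G' rmorphB /=; ring.
  by rewrite modpD modpN -e2 -modpN -modpD.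
have hr : forall k, `|r`_k| <= d / (4%:R * n%:R).
  move=> k; case: (ltnP k n) => kn; last first.
    rewrite nth_default; last exact: leq_trans sr kn.
    by rewrite normr0 divr_ge0 // ltW // mulr_gt0 // ltr0n.
  rewrite -(ler_rat R) rmorphM rmorphV ?unitfE ?mulf_neq0 ?pnatr_eq0 -?lt0n //.
  rewrite ratr_norm -coef_map er rmorphM !rmorph_nat.
  apply: (le_trans (L2 _ _ _ sD (ltW e0) e1 hD)); apply: le_trans eC.
  by rewrite ler_wpM2l ?CbC // ltW.
pose a (j : nat) := r`_j.+1 / (2%:R * d).
pose w0 := 1 + r`_0 / d - \sum_(j < m) a j ^+ 2.
have nQ : (0 : rat) < n%:R by rewrite ltr0n.
have w00 : 0 < w0.
  have ha : forall j, `|a j| <= 1 / (8%:R * n%:R).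
    move=> j; rewrite /a normrM normfV normrM (gtr0_norm d0) normr_nat.
    rewrite ler_pdivrMr ?mulr_gt0 //; apply: le_trans (hr j.+1) _.
    rewrite le_eqVlt; apply/orP; left; apply/eqP; field.
    by rewrite gt_eqF //= pnatr_eq0 -lt0n.
  have hs : \sum_(j < m) a j ^+ 2 <= 1 / 8%:R.
    apply: le_trans (_ : \sum_(j < m) (1 / (8%:R * n%:R)) <= _).
      apply: ler_sum => j _; have := ha j.
      have hn1 : 1 / (8%:R * n%:R) <= 1 :> rat.
        rewrite ler_pdivrMr ?mulr_gt0 // mul1r; apply: (le_trans (_ : 1 <= 8%:R)) => //.
        by rewrite ler_peMr // ler1n.
      rewrite ler_norml => /andP [h1 h2]; nra.
    rewrite sumr_const card_ord -[X in X <= _]mulr_natr.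
    have hmN : (m%:R : rat) <= n%:R by rewrite ler_nat En.
    have hb : 0 <= 1 / (8%:R * n%:R) :> rat by rewrite divr_ge0 // mulr_ge0 // ltW.
    apply: le_trans (ler_wpM2l hb hmN) _.
    rewrite le_eqVlt; apply/orP; left; apply/eqP; field.
    by rewrite gt_eqF.
  have h0 : - (1 / 4%:R) <= r`_0 / d.
    have := hr 0%N; rewrite ler_norml => /andP [h1 _].
    rewrite ler_pdivlMr //; apply: le_trans h1; rewrite mulNr lerN2.
    have hN1 : (1 : rat) <= n%:R by rewrite ler1n En.
    rewrite ler_pdivrMr ?mulr_gt0 //; nra.
  rewrite /w0; lra.
pose p (i : 'I_n.+1) : {poly rat} :=
  if (i : nat) == 0%N then h else if (i : nat) == m.+1 then 1 else 'X^i + (a i.-1)%:P.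
pose lam (i : 'I_n.+1) : rat :=
  if (i : nat) == 0%N then 1 else if (i : nat) == m.+1 then d * w0 else d.
have sp : forall i, (size (p i) <= n)%N.
  move=> i; rewrite /p; case: eqP => _ //; case: eqP => [_|hi].
    by rewrite size_poly1 En.
  rewrite (leq_trans (size_add _ _)) // geq_max size_polyXn.
  have hin : (i < n)%N.
    by rewrite ltn_neqAle -ltnS ltn_ord andbT; apply/eqP => ei; apply: hi; rewrite ei En.
  by rewrite hin /= (leq_trans (size_polyC_leq1 _)) // En.
have lp : forall i, 0 < lam i.
  by move=> i; rewrite /lam; case: eqP => _ //; case: eqP => _ //; rewrite mulr_gt0.
have ident : \sum_(i < n.+1) lam i *: p i ^+ 2 = h ^+ 2 + d%:P * T + r.
  have er' : r = \sum_(k < n) r`_k *: 'X^k := poly_expand sr.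
  rewrite er' /T; clear -En d0; subst n.
  rewrite big_ord_recl big_ord_recr /= !big_ord_recl /=.
  have e1 : forall i : 'I_m, lam (lift ord0 (widen_ord (leqnSn m) i)) *:
      p (lift ord0 (widen_ord (leqnSn m) i)) ^+ 2 =
      d *: 'X^(i.+1) ^+ 2 + r`_i.+1 *: 'X^(i.+1) + (d * a i ^+ 2)%:P.
    move=> i; rewrite /lam /p lift0 /= eqSS (ltn_eqF (ltn_ord i)).
    have ea : r`_i.+1 = 2%:R * d * a i by rewrite /a; field; rewrite gt_eqF.
    rewrite ea -!mul_polyC !polyCM rmorph_nat; ring.
  rewrite (eq_bigr _ (fun i _ => e1 i)) !big_split /=.
  rewrite /lam /p lift0 /= eqxx expr0 expr1n scale1r.
  have eb : forall i, bump 0 i = i.+1 by [].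
  under [X in _ = _ + d%:P * (_ + X) + _]eq_bigr do rewrite eb.
  under [X in _ = _ + (_ + X)]eq_bigr do rewrite eb.
  rewrite -!mul_polyC -scaler_sumr -rmorph_sum -!mul_polyC.
  have -> : (d * w0)%:P = d%:P + (r`_0)%:P - (d * \sum_(j < m) a j ^+ 2)%:P.
    rewrite -polyCD -polyCB; congr (_%:P); rewrite /w0; field; by rewrite gt_eqF.
  rewrite -mulr_sumr; ring.
  have dvd1 : f %| (\sum_(i < n.+1) lam i *: p i ^+ 2) - g.
  rewrite ident.
  set X := g - h ^+ 2 - d%:P * T.
  have eq := divp_eq X f.
  have er2 : r = X - X %/ f * f.
    by rewrite /r; apply/eqP; rewrite eq_sym subr_eq addrC -eq.
  rewrite er2.
  have -> : h ^+ 2 + d%:P * T + (X - X %/ f * f) - g = - (X %/ f * f) by rewrite /X; ring.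
  by rewrite dvdpNr dvdp_mull.
pose v (i : 'I_n.+1) := (p i ^+ 2) %% f.
have sv : forall i, (size (v i) <= n)%N by move=> i; rewrite -ltnS -sf ltn_modpN0.
have [j [lam' [hnn [hj hsum]]]] := carath sv lp.
exists (fun i => if lam' (lift j i) == 0 then 0 else p (lift j i)).
exists (fun i => if lam' (lift j i) == 0 then 1 else lam' (lift j i)).
split; first by move=> i; case: eqP => _ //; rewrite size_poly0.
split.
  move=> i; case: eqP => // /eqP h1; by rewrite lt_neqAle eq_sym h1 hnn.
apply: modp_eq_dvd.
have e3 : \sum_(i < n) (if lam' (lift j i) == 0 then 1 else lam' (lift j i))%:P *
     (if lam' (lift j i) == 0 then 0 else p (lift j i)) ^+ 2 =
     \sum_(i < n.+1) lam' i *: p i ^+ 2.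
  rewrite (bigD1_ord j) //= hj scale0r add0r; apply: eq_bigr => i _.
  case: eqP => [->|_]; first by rewrite scale0r expr0n /= mulr0.
  by rewrite mul_polyC.
rewrite e3 modp_lin.
have -> : \sum_(i < n.+1) lam' i *: (p i ^+ 2 %% f) = \sum_(i < n.+1) lam i *: (p i ^+ 2 %% f)
  by exact: hsum.
by rewrite -modp_lin; apply: dvd_modp_eq.
Qed.
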